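(* Define the relation $\succeq^1$ on $\mathcal{A}$ by $\mathbf{A}\succeq^1\mathbf{B}\iff\nu(\mathbf{A})\ge\nu(\mathbf{B})$, where for $\mathbf{A}=[a_{ij}]$ of size $n$, $\nu(\mathbf{A})=\min_{1\le i<j<k\le n}\max\{a_{ij}a_{jk}/a_{ik},\ a_{ik}/(a_{ij}a_{jk})\}$. Then $\succeq^1$ is an inconsistency ranking that satisfies IIP, HTE, SI, MON and RED, but does not satisfy PR.
   Context: A pairwise comparison matrix of size $n$ is a matrix $\mathbf{A}=[a_{ij}]\in\mathbb{R}^{n\times n}$ with all entries positive and $a_{ji}=1/a_{ij}$ for all $i,j$. Let $\mathcal{A}$ denote the set of all pairwise comparison matrices of all sizes $n\ge 3$. For $\mathbf{A}\in\mathcal{A}$ of size $n$ and $3\le m\le n$, a submatrix of $\mathbf{A}$ is a matrix $\mathbf{B}=[b_{ij}]$ of size $m$ with $b_{ij}=a_{\sigma(i)\sigma(j)}$ for some strictly increasing map $\sigma:\{1,\dots,m\}\to\{1,\dots,n\}$. A triad is a pairwise comparison matrix of size $3$; a triad of $\mathbf{A}$ is a submatrix of $\mathbf{A}$ of size $3$ (when $n=3$, $\mathbf{A}$ is its own unique triad). A triad $\mathbf{T}$ is written $\mathbf{T}=(t_1;t_2;t_3)$, meaning $t_{12}=t_1$, $t_{13}=t_2$, $t_{23}=t_3$ (the remaining entries are determined by reciprocity); $\mathbf{T}^\top$ denotes its transpose, i.e. the triad $(1/t_1;1/t_2;1/t_3)$. An inconsistency ranking is a complete and transitive binary relation $\succeq$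 on $\mathcal{A}$; $\mathbf{A}\sim\mathbf{B}$ means $\mathbf{A}\succeq\mathbf{B}$ and $\mathbf{B}\succeq\mathbf{A}$; $\mathbf{A}\preceq\mathbf{B}$ means $\mathbf{B}\succeq\mathbf{A}$. Properties of an inconsistency ranking $\succeq$: (PR) for all $s_2,t_2\ge 1$: $(1;s_2;1)\succeq(1;t_2;1)\iff s_2\le t_2$. (IIP) $\mathbf{T}\sim\mathbf{T}^\top$ for every triad $\mathbf{T}$. (HTE) $(1;t_2;t_3)\sim(1;t_2/t_3;1)$ for all $t_2,t_3>0$. (SI) $(t_1;t_2;t_3)\sim(kt_1;k^2t_2;kt_3)$ for all $t_1,t_2,t_3>0$ and all $k>0$. (MON) $\mathbf{A}\preceq\mathbf{T}$ for every $\mathbf{A}\in\mathcal{A}$ and every triad $\mathbf{T}$ of $\mathbf{A}$. (RED) every $\mathbf{A}\in\mathcal{A}$ has a triad $\mathbf{T}$ with $\mathbf{A}\sim\mathbf{T}$. *)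

(* Defs.v *)
(* classical real numbers. Indices are 0-based: entry a_{ij}
   of the paper (1 <= i,j <= n) is [pcm_a A (i-1) (j-1)]. *)
From Stdlib Require Import Reals List Arith.
Import ListNotations.
Open Scope R_scope.

(* A pairwise comparison matrix of size n >= 3 (the set \mathcal{A}).
   Only entries with indices < n are meaningful. *)
Record PCM := mkPCM {
  pcm_n : nat;
  pcm_a : nat -> nat -> R;
  pcm_n_ge3 : (3 <= pcm_n)%nat;
  pcm_pos : forall i j, (i < pcm_n)%nat -> (j < pcm_n)%nat -> 0 < pcm_a i j;
  pcm_rec : forall i j, (i < pcm_n)%nat -> (j < pcm_n)%nat ->
              pcm_a j i = / pcm_a i j
}.

Definition triples (n : nat) : list (nat * nat * nat) :=
  flat_map (fun i =>
    flat_map (fun j =>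
      map (fun k => (i, j, k)) (seq (S j) (n - S j)))
    (seq (S i) (n - S i)))
  (seq 0 n).

Definition triple_val (a : nat -> nat -> R) (t : nat * nat * nat) : R :=
  let '(i, j, k) := t in
  Rmax (a i j * a j k / a i k) (a i k / (a i j * a j k)).

Definition list_min (l : list R) : R :=
  match l with
  | [] => 1
  | x :: l' => fold_left Rmin l' x
  end.

Definition nu (A : PCM) : R :=
  list_min (map (triple_val (pcm_a A)) (triples (pcm_n A))).

Definition ge1 (A B : PCM) : Prop := nu A >= nu B.

Definition equivR (ge : PCM -> PCM -> Prop) (A B : PCM) : Prop :=
  ge A B /\ ge B A.

Definition inconsistency_ranking (ge : PCM -> PCM -> Prop) : Prop :=
  (forall A B, ge A B \/ ge B A) /\
  (forall A B C, ge A B -> ge B C -> ge A C).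

Definition is_triad (T : PCM) (t1 t2 t3 : R) : Prop :=
  pcm_n T = 3%nat /\ pcm_a T 0 1 = t1 /\ pcm_a T 0 2 = t2 /\ pcm_a T 1 2 = t3.

Definition submatrix (B A : PCM) : Prop :=
  (pcm_n B <= pcm_n A)%nat /\
  exists sigma : nat -> nat,
    (forall i j, (i < j)%nat -> (j < pcm_n B)%nat -> (sigma i < sigma j)%nat) /\
    (forall i, (i < pcm_n B)%nat -> (sigma i < pcm_n A)%nat) /\
    (forall i j, (i < pcm_n B)%nat -> (j < pcm_n B)%nat ->
        pcm_a B i j = pcm_a A (sigma i) (sigma j)).

Definition triad_of (T A : PCM) : Prop := pcm_n T = 3%nat /\ submatrix T A.

Definition PR (ge : PCM -> PCM -> Prop) : Prop :=
  forall (s2 t2 : R) (S T : PCM), 1 <= s2 -> 1 <= t2 ->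
    is_triad S 1 s2 1 -> is_triad T 1 t2 1 -> (ge S T <-> s2 <= t2).

Definition IIP (ge : PCM -> PCM -> Prop) : Prop :=
  forall (t1 t2 t3 : R) (T U : PCM),
    is_triad T t1 t2 t3 -> is_triad U (/ t1) (/ t2) (/ t3) -> equivR ge T U.

Definition HTE (ge : PCM -> PCM -> Prop) : Prop :=
  forall (t2 t3 : R) (T U : PCM), 0 < t2 -> 0 < t3 ->
    is_triad T 1 t2 t3 -> is_triad U 1 (t2 / t3) 1 -> equivR ge T U.

Definition SI (ge : PCM -> PCM -> Prop) : Prop :=
  forall (t1 t2 t3 k : R) (T U : PCM), 0 < t1 -> 0 < t2 -> 0 < t3 -> 0 < k ->
    is_triad T t1 t2 t3 -> is_triad U (k * t1) (k ^ 2 * t2) (k * t3) ->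
    equivR ge T U.

Definition MON (ge : PCM -> PCM -> Prop) : Prop :=
  forall A T : PCM, triad_of T A -> ge T A.

Definition RED (ge : PCM -> PCM -> Prop) : Prop :=
  forall A : PCM, exists T : PCM, triad_of T A /\ equivR ge A T.

(* Main.v *)
Require Import Defs.
From Stdlib Require Import Reals List Arith Lia Lra.
Import ListNotations.
Open Scope R_scope.

Lemma fold_min_le : forall l x, fold_left Rmin l x <= x /\
  (forall y, In y l -> fold_left Rmin l x <= y).
Proof.
  induction l as [|a l IH]; intros x; simpl.
  - split; [lra | tauto].
  - destruct (IH (Rmin x a)) as [H1 H2]. split.
    + pose proof (Rmin_l x a); lra.
    + intros y [<-|Hy]; [pose proof (Rmin_r x a); lra | auto].
Qed.

Lemma fold_min_in : forall l x, fold_left Rmin l x = x \/ In (fold_left Rmin l x) l.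
Proof.
  induction l as [|a l IH]; intros x; simpl; [auto|].
  destruct (Rle_dec x a) as [h|h].
  - rewrite (Rmin_left _ _ h). destruct (IH x); auto.
  - rewrite (Rmin_right x a) by lra. destruct (IH a) as [E|E]; auto.
Qed.

Lemma list_min_le : forall l y, In y l -> list_min l <= y.
Proof.
  intros [|a l] y Hy; [destruct Hy|]. simpl. destruct Hy as [<-|Hy].
  - apply (proj1 (fold_min_le l a)).
  - apply (proj2 (fold_min_le l a)); auto.
Qed.

Lemma list_min_in : forall l, l <> [] -> In (list_min l) l.
Proof.
  intros [|a l] H; [congruence|]. simpl.
  destruct (fold_min_in l a) as [E|E]; [rewrite E; auto | auto].
Qed.

Lemma in_triples : forall n i j k, In (i, j, k) (triples n) <->
  (i < j /\ j < k /\ k < n)%nat.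
Proof.
  intros n i j k. unfold triples. rewrite in_flat_map. split.
  - intros [i' [Hi' H]]. rewrite in_flat_map in H. destruct H as [j' [Hj' H]].
    rewrite in_map_iff in H. destruct H as [k' [E Hk']]. inversion E; subst.
    apply in_seq in Hi'. apply in_seq in Hj'. apply in_seq in Hk'. lia.
  - intros Hl. exists i. split; [apply in_seq; lia|].
    rewrite in_flat_map. exists j. split; [apply in_seq; lia|].
    apply in_map_iff. exists k. split; [reflexivity| apply in_seq; lia].
Qed.

Lemma nu_triad : forall T, pcm_n T = 3%nat ->
  nu T = triple_val (pcm_a T) (0,1,2)%nat.
Proof. intros T H. unfold nu. rewrite H. reflexivity. Qed.

Lemma nu_is_triad : forall T t1 t2 t3, is_triad T t1 t2 t3 ->
  nu T = Rmax (t1 * t3 / t2) (t2 / (t1 * t3)).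
Proof.
  intros T t1 t2 t3 [H [H1 [H2 H3]]]. rewrite nu_triad by auto. simpl.
  rewrite H1, H2, H3. reflexivity.
Qed.

Lemma triad_pos : forall T t1 t2 t3, is_triad T t1 t2 t3 -> 0 < t1 /\ 0 < t2 /\ 0 < t3.
Proof.
  intros T t1 t2 t3 [H [H1 [H2 H3]]]. subst.
  repeat split; apply pcm_pos; rewrite H; lia.
Qed.

Definition tri_a (t1 t2 t3 : R) (i j : nat) : R :=
  match i, j with
  | 0, 1 => t1 | 0, 2 => t2 | 1, 2 => t3
  | 1, 0 => / t1 | 2, 0 => / t2 | 2, 1 => / t3
  | _, _ => 1 end.

Lemma tri_pos : forall t1 t2 t3, 0 < t1 -> 0 < t2 -> 0 < t3 ->
  forall i j, (i < 3)%nat -> (j < 3)%nat -> 0 < tri_a t1 t2 t3 i j.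
Proof.
  intros t1 t2 t3 h1 h2 h3 i j Hi Hj.
  destruct i as [|[|[|i]]]; try lia; destruct j as [|[|[|j]]]; try lia; simpl;
  try lra; apply Rinv_0_lt_compat; auto.
Qed.

Lemma tri_rec : forall t1 t2 t3, 0 < t1 -> 0 < t2 -> 0 < t3 ->
  forall i j, (i < 3)%nat -> (j < 3)%nat -> tri_a t1 t2 t3 j i = / tri_a t1 t2 t3 i j.
Proof.
  intros t1 t2 t3 h1 h2 h3 i j Hi Hj.
  destruct i as [|[|[|i]]]; try lia; destruct j as [|[|[|j]]]; try lia; simpl;
  try rewrite Rinv_inv; try rewrite Rinv_1; reflexivity.
Qed.

Definition mkTri t1 t2 t3 (h1 : 0 < t1) (h2 : 0 < t2) (h3 : 0 < t3) : PCM :=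
  mkPCM 3 (tri_a t1 t2 t3) ltac:(lia) (tri_pos t1 t2 t3 h1 h2 h3)
    (tri_rec t1 t2 t3 h1 h2 h3).

Lemma mkTri_triad : forall t1 t2 t3 h1 h2 h3, is_triad (mkTri t1 t2 t3 h1 h2 h3) t1 t2 t3.
Proof. intros. repeat split. Qed.

Definition sig3 (i j k : nat) (x : nat) : nat :=
  match x with 0 => i | 1 => j | _ => k end%nat.

Lemma sig3_lt : forall i j k n, (i < j)%nat -> (j < k)%nat -> (k < n)%nat ->
  forall x, (x < 3)%nat -> (sig3 i j k x < n)%nat.
Proof. intros. destruct x as [|[|x]]; simpl; lia. Qed.

Definition subA (A : PCM) i j k (Hij : (i < j)%nat) (Hjk : (j < k)%nat)
  (Hk : (k < pcm_n A)%nat) : PCM :=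
  mkPCM 3 (fun x y => pcm_a A (sig3 i j k x) (sig3 i j k y)) ltac:(lia)
    (fun x y hx hy => pcm_pos A _ _ (sig3_lt i j k _ Hij Hjk Hk x hx)
        (sig3_lt i j k _ Hij Hjk Hk y hy))
    (fun x y hx hy => pcm_rec A _ _ (sig3_lt i j k _ Hij Hjk Hk x hx)
        (sig3_lt i j k _ Hij Hjk Hk y hy)).

Theorem mainTheorem2 :
  inconsistency_ranking ge1 /\ IIP ge1 /\ HTE ge1 /\ SI ge1 /\
  MON ge1 /\ RED ge1 /\ ~ PR ge1.
Proof.
  split; [|split; [|split; [|split; [|split; [|split]]]]].
  - unfold ge1; split; intros; lra.
  - intros t1 t2 t3 T U HT HU.
    destruct (triad_pos _ _ _ _ HT) as [h1 [h2 h3]].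
    unfold equivR, ge1. rewrite (nu_is_triad _ _ _ _ HT), (nu_is_triad _ _ _ _ HU).
    assert (E1 : / t1 * / t3 / / t2 = t2 / (t1 * t3)) by (field; lra).
    assert (E2 : / t2 / (/ t1 * / t3) = t1 * t3 / t2) by (field; lra).
    rewrite E1, E2, Rmax_comm. lra.
  - intros t2 t3 T U h2 h3 HT HU. unfold equivR, ge1.
    rewrite (nu_is_triad _ _ _ _ HT), (nu_is_triad _ _ _ _ HU).
    assert (E1 : 1 * 1 / (t2 / t3) = 1 * t3 / t2) by (field; lra).
    assert (E2 : t2 / t3 / (1 * 1) = t2 / (1 * t3)) by (field; lra).
    rewrite E1, E2. lra.
  - intros t1 t2 t3 k T U h1 h2 h3 hk HT HU. unfold equivR, ge1.
    rewrite (nu_is_triad _ _ _ _ HT), (nu_is_triad _ _ _ _ HU).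
    assert (E1 : k * t1 * (k * t3) / (k ^ 2 * t2) = t1 * t3 / t2) by (field; lra).
    assert (E2 : k ^ 2 * t2 / (k * t1 * (k * t3)) = t2 / (t1 * t3)) by (field; lra).
    rewrite E1, E2. lra.
  - intros A T [H3 [Hle [s [Hmon [Hb He]]]]]. unfold ge1.
    rewrite nu_triad by auto. simpl.
    rewrite !He by lia.
    apply Rle_ge. unfold nu. apply list_min_le. apply in_map_iff.
    exists (s 0%nat, s 1%nat, s 2%nat). split; [reflexivity|].
    apply in_triples. repeat split; [apply Hmon|apply Hmon|apply Hb]; lia.
  - intros A.
    assert (Hne : map (triple_val (pcm_a A)) (triples (pcm_n A)) <> []).
    { intros E. pose proof (pcm_n_ge3 A).
      assert (Hin : In (0,1,2)%nat (triples (pcm_n A))) by (apply in_triples; lia).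
      apply (in_map (triple_val (pcm_a A))) in Hin. rewrite E in Hin. destruct Hin. }
    pose proof (list_min_in _ Hne) as Hin. apply in_map_iff in Hin.
    destruct Hin as [[[i j] k] [Ev Ht]]. apply in_triples in Ht.
    destruct Ht as [Hij [Hjk Hk]].
    exists (subA A i j k Hij Hjk Hk). split.
    + split; [reflexivity|]. split; [simpl; pose proof (pcm_n_ge3 A); lia|].
      exists (sig3 i j k). simpl. repeat split.
      * intros x y Hxy Hy. destruct x as [|[|x]]; destruct y as [|[|y]]; simpl; lia.
      * intros x Hx. apply sig3_lt; auto.
    + assert (E : nu (subA A i j k Hij Hjk Hk) = nu A).
      { rewrite nu_triad by reflexivity. unfold nu; rewrite <- Ev. reflexivity. }
      unfold equivR, ge1. rewrite E. lra.
  - intros HPR.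
    assert (h1 : 0 < 1) by lra. assert (h2 : 0 < 2) by lra.
    specialize (HPR 2 1 (mkTri 1 2 1 h1 h2 h1) (mkTri 1 1 1 h1 h1 h1)).
    assert (HS := mkTri_triad 1 2 1 h1 h2 h1). assert (HT := mkTri_triad 1 1 1 h1 h1 h1).
    destruct (HPR ltac:(lra) ltac:(lra) HS HT) as [Hf _].
    assert (Hg : ge1 (mkTri 1 2 1 h1 h2 h1) (mkTri 1 1 1 h1 h1 h1)).
    { unfold ge1. rewrite (nu_is_triad _ _ _ _ HS), (nu_is_triad _ _ _ _ HT).
      assert (E1 : 1 * 1 / 1 = 1) by field. assert (E2 : 1/(1*1) = 1) by field.
      rewrite E1, E2. rewrite (Rmax_left 1 1) by lra.
      apply Rle_ge, Rle_trans with (2 / (1*1)); [|apply Rmax_r].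
      assert (E3 : 2/(1*1) = 2) by field. lra. }
    specialize (Hf Hg). lra.
Qed.
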